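(* Let $\pi_\theta$ be a parametrized policy with $\pi_\theta(a\mid s)>0$ differentiable in $\theta$ for all $(s,a)$, and let $P_\nu$ be an encoding matrix of full row rank. Define $P_U^{\theta}=P_\nu P_{\mathcal{S}}^{\pi_\theta}P_\nu^{\dagger}$, assume the spectral radius of $\gamma P_U^{\theta}$ is less than $1$, and define the abstract value function $V_U^{\theta}=(I-\gamma P_U^{\theta})^{-1}P_\nu R_{\mathcal{S}}^{\pi_\theta}$. Let $\eta(x\mid u)=\sum_{t=0}^{\infty}\gamma^t\big((P_U^{\theta})^t\big)_{u,x}$ for $u,x\in U$ and $P_1(u'\mid s,a)=\sum_{s'\in\mathcal{S}}P_{\mathcal{S}\mathcal{A}}(s'\mid s,a)\,P_\nu^{\dagger}(s',u')$. Then for every $u\in U$, $$\nabla_\theta V_U^{\theta}(u)=\sum_{x\in U}\eta(x\mid u)\sum_{s\in\mathcal{S}}\nu(s\mid x)\sum_{a\in\mathcal{A}}\pi_\theta(a\mid s)\,\nabla_\theta\ln\pi_\theta(a\mid s)\Big[r(s,a)+\gamma\sum_{u'\in U}P_1(u'\mid s,a)\,V_U^{\theta}(u')\Big].$$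
   Context: Ground MDP with finite $\mathcal{S},\mathcal{A}$, transition probabilities $P_{\mathcal{S}\mathcal{A}}(s'\mid s,a)$, reward $r$, discount $\gamma\in(0,1)$. $P_{\mathcal{S}}^{\pi}(s,s')=\sum_a\pi(a\mid s)P_{\mathcal{S}\mathcal{A}}(s'\mid s,a)$, $R_{\mathcal{S}}^{\pi}(s)=\sum_a\pi(a\mid s)r(s,a)$. The encoding matrix $P_\nu\in\mathbb{R}^{|U|\times|\mathcal{S}|}$ has $(u,s)$ entry $\nu(s\mid u)$, each row a probability distribution on $\mathcal{S}$, $U$ a finite abstract state set. $P_\nu^{\dagger}=P_\nu^\top(P_\nu P_\nu^\top)^{-1}\in\mathbb{R}^{|\mathcal{S}|\times|U|}$, and $P_\nu^{\dagger}(s',u')$ denotes its $(s',u')$ entry. *)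

(* Defs.v *)
From HB Require Import structures.
From mathcomp Require Import all_boot all_order all_algebra.
From mathcomp Require Import all_classical all_reals all_analysis.
From mathcomp Require Import complex.
Set Implicit Arguments. Unset Strict Implicit. Unset Printing Implicit Defensive.
Import Order.TTheory GRing.Theory Num.Theory.
Import numFieldNormedType.Exports.
Local Open Scope ring_scope.

Section Defs.
Variable R : realType.
Variables (nS nA nU d : nat).

(* P_S^pi(s,s') = sum_a pi(a|s) P_SA(s'|s,a);  pi th s a = pi_theta(a|s),
   P s a s' = P_SA(s'|s,a). *)
Definition PS (pi : 'rV[R]_d -> 'I_nS -> 'I_nA -> R)
  (P : 'I_nS -> 'I_nA -> 'I_nS -> R) (th : 'rV[R]_d) : 'M[R]_nS :=
  \matrix_(s, s') \sum_(a < nA) pi th s a * P s a s'.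

Definition RS (pi : 'rV[R]_d -> 'I_nS -> 'I_nA -> R)
  (r : 'I_nS -> 'I_nA -> R) (th : 'rV[R]_d) : 'cV[R]_nS :=
  \col_s \sum_(a < nA) pi th s a * r s a.

(* encoding matrix: (u,s) entry nu(s|u) *)
Definition Pnu (nu : 'I_nU -> 'I_nS -> R) : 'M[R]_(nU, nS) :=
  \matrix_(u, s) nu u s.

Definition pdag (M : 'M[R]_(nU, nS)) : 'M[R]_(nS, nU) :=
  M^T *m invmx (M *m M^T).

Definition PU pi P nu th : 'M[R]_nU := Pnu nu *m PS pi P th *m pdag (Pnu nu).

Definition VU pi P r nu (gamma : R) th : 'cV[R]_nU :=
  invmx (1%:M - gamma *: PU pi P nu th) *m (Pnu nu *m RS pi r th).

Definition etaU pi P nu (gamma : R) th (x u : 'I_nU) : R :=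
  limn (fun n : nat => \sum_(0 <= t < n) gamma ^+ t * (PU pi P nu th ^+ t) u x).

Definition P1 (P : 'I_nS -> 'I_nA -> 'I_nS -> R) nu (s : 'I_nS) (a : 'I_nA)
  (u' : 'I_nU) : R :=
  \sum_(s' < nS) P s a s' * pdag (Pnu nu) s' u'.
End Defs.

Definition spectral_radius_lt1 (R : realType) (n : nat) (A : 'M[R]_n) : Prop :=
  forall lam : R[i], eigenvalue (map_mx (fun x : R => (x%:C)%C) A) lam ->
    `|lam| < 1.

(* Main.v *)
Require Import Defs.
From HB Require Import structures.
From mathcomp Require Import all_boot all_order all_algebra.
From mathcomp Require Import all_classical all_reals all_analysis.
From mathcomp Require Import complex.
From mathcomp Require Import ring lra.
Import Order.TTheory GRing.Theory Num.Theory.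
Import numFieldNormedType.Exports.
Local Open Scope ring_scope.
Set Implicit Arguments.
Local Open Scope classical_set_scope.
Section Spec.
Variable R : realType.
Local Notation C := (R[i]).
Definition nm (z : C) : R := Num.sqrt ((complex.Re z)^+2 + (complex.Im z)^+2).
Lemma nmE (z : C) : `|z| = ((nm z)%:C)%C.
Proof. exact: normc_def. Qed.
Lemma nmD (a b : C) : nm (a + b) <= nm a + nm b.
Proof. by rewrite -lecR rmorphD /= -!nmE ler_normD. Qed.
Lemma nmM (a b : C) : nm (a * b) = nm a * nm b.
Proof. by apply: (@complexI R); rewrite rmorphM /= -!nmE normrM. Qed.
Lemma nm_ge0 (a : C) : 0 <= nm a.
Proof. exact: sqrtr_ge0. Qed.
Lemma nmR (x : R) : nm (x%:C)%C = `|x|.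
Proof. by rewrite /nm /= expr0n /= addr0 sqrtr_sqr. Qed.
Lemma nmB (a b : C) : nm (a - b) <= nm a + nm b.
Proof. apply: le_trans (nmD _ _) _. by rewrite -lecR !rmorphD /= -!nmE normrN. Qed.
Definition bsum (x : nat -> C) := exists B : R, forall N, \sum_(k < N) nm (x k) <= B.

Lemma rec_bsum (x w : nat -> C) (z : C) : nm z < 1 ->
  (forall k, x k.+1 = z * x k + w k) -> bsum w -> bsum x.
Proof.
move=> z1 rec [Bw hw]; exists ((nm (x 0) + Bw) / (1 - nm z)) => N.
have z0 : 0 < 1 - nm z by rewrite subr_gt0.
rewrite ler_pdivlMr //.
set T := \sum_(k < N) nm (x k).
have h1 : T <= \sum_(k < N.+1) nm (x k).
  by rewrite big_ord_recr /= lerDl nm_ge0.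
have h2 : \sum_(k < N.+1) nm (x k) <= nm (x 0) + (nm z * T + Bw).
  rewrite big_ord_recl lerD2l /T mulr_sumr.
  apply: le_trans (_ : \sum_(i < N) (nm z * nm (x i) + nm (w i)) <= _).
    apply: ler_sum => i _; rewrite /bump /= rec.
    by apply: le_trans (nmD _ _) _; rewrite nmM.
  by rewrite big_split /= lerD2l hw.
have := le_trans h1 h2.
have := nm_ge0 z; have : 0 <= T by apply: sumr_ge0 => i _; exact: nm_ge0.
move=> *; nra.
Qed.
Lemma prod_bsum n (B : 'M[C]_n.+1) (rs : seq C) :
  (forall z, z \in rs -> nm z < 1) -> forall N : 'M[C]_n.+1,
  N *m \prod_(z <- rs) (B - z%:M) = 0 ->
  forall i j, bsum (fun k => (N *m B ^+ k) i j).
Proof.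
elim: rs => [|z rs IH] hrs N.
  rewrite big_nil mulmx1 => -> i j; exists 0 => M.
  rewrite big1 // => k _; rewrite mul0mx mxE.
  by rewrite /nm /= expr0n /= addr0 sqrtr0.
rewrite big_cons -mulmxE mulmxA => hN i j.
have hz : nm z < 1 by apply: hrs; rewrite inE eqxx.
have hw : bsum _ := IH (fun y hy => hrs y (introT orP (or_intror hy))) _ hN i j.
apply: (@rec_bsum _ (fun k => (N *m (B - z%:M) *m B ^+ k) i j) z hz) => // k.
have -> : N *m (B - z%:M) *m B ^+ k = N *m B ^+ k.+1 - z *: (N *m B ^+ k).
  by rewrite mulmxBr mul_mx_scalar mulmxBl -scalemxAl exprS -mulmxE mulmxA.
set X := N *m B ^+ k.+1; set Y := N *m B ^+ k.
rewrite !mxE; ring.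
Qed.

Lemma cvg_sum_seq (T : Type) (r : seq T) (f : T -> nat -> R) :
  (forall t, f t n @[n --> \oo] --> 0) ->
  (\sum_(t <- r) f t n) @[n --> \oo] --> 0.
Proof.
move=> hf; elim: r => [|t r IH].
  have -> : (fun n => \sum_(t <- [::]) f t n) = fun _ => 0.
    by apply/funext => n; rewrite big_nil.
  exact: cvg_cst.
have -> : (fun n => \sum_(t0 <- t :: r) f t0 n) =
    (fun n => f t n + \sum_(t0 <- r) f t0 n).
  by apply/funext => n; rewrite big_cons.
by have := cvgD (hf t) IH; rewrite addr0; apply.
Qed.

Lemma spec_cvg0 n (A : 'M[R]_n.+1) : spectral_radius_lt1 A ->
  forall i j, (A ^+ k) i j @[k --> \oo] --> 0.
Proof.
move=> hs i j.
set B := map_mx (fun x : R => (x%:C)%C) A.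
have [rs hrs] := closed_field_poly_normal (char_poly B).
rewrite (monicP (char_poly_monic B)) scale1r in hrs.
have hz : forall z, z \in rs -> nm z < 1.
  move=> z zin; have := hs z.
  rewrite eigenvalue_root_char hrs root_prod_XsubC zin => /(_ isT).
  by rewrite nmE -(rmorph1 (real_complex R)) ltcR.
have h0 : 1 *m \prod_(z <- rs) (B - z%:M) = 0.
  rewrite mul1mx -(Cayley_Hamilton B) hrs rmorph_prod.
  by apply: eq_bigr => z _; rewrite rmorphB /= horner_mx_X horner_mx_C.
have [Bd hb] := @prod_bsum _ B rs hz _ h0 i j.
have hb' : forall N, \sum_(k < N) `|(A ^+ k) i j| <= Bd.
  move=> N; apply: le_trans (hb N); rewrite le_eqVlt; apply/orP; left.
  apply/eqP; apply: eq_bigr => k _.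
  by rewrite mul1mx /B -rmorphXn mxE nmR.
apply: norm_cvg0.
apply: (@cvg_series_cvg_0 _ _ (fun k => `|(A ^+ k) i j|)).
apply: nondecreasing_is_cvgn.
  by apply: nondecreasing_series => k _ _.
exists Bd => y [N _ <-].
by rewrite /series /= big_mkord.
Qed.
Lemma spec_unit n (A : 'M[R]_n.+1) : spectral_radius_lt1 A -> (1 - A) \in unitmx.
Proof.
move=> hs; rewrite unitmxE unitfE; apply/negP => /det0P [v v0 hv].
have hev : eigenvalue A 1.
  apply/eigenvalueP; exists v => //.
  by move/eqP: hv; rewrite mulmxBr mulmx1 subr_eq0 scale1r => /eqP <-.
have := hs (1%:C)%C; rewrite -(eigenvalue_map (real_complex R)) in hev.
move=> /(_ hev); by rewrite rmorph1 normr1 ltxx.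
Qed.

Lemma eta_lim n (A : 'M[R]_n.+1) : spectral_radius_lt1 A -> forall i j,
  limn (fun N => \sum_(0 <= t < N) (A ^+ t) i j) = invmx (1 - A) i j.
Proof.
move=> hs i j; have hu := @spec_unit _ A hs.
have e N : \sum_(0 <= t < N) (A ^+ t) i j =
    invmx (1 - A) i j - \sum_k invmx (1 - A) i k * (A ^+ N) k j.
  have h1 : 1 - A ^+ N = (1 - A) *m \sum_(t < N) A ^+ t.
    by rewrite mulmxE -opprB subrX1 -mulNr opprB.
  have : invmx (1 - A) *m (1 - A ^+ N) = \sum_(t < N) A ^+ t.
    by rewrite h1 mulKmx.
  rewrite mulmxBr mulmx1 => h2.
  rewrite big_mkord -summxE -h2 mxE mxE.
  by congr (_ - _); rewrite mxE.
rewrite (_ : (fun N => _) = (fun N => invmx (1 - A) i j -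
    \sum_k invmx (1 - A) i k * (A ^+ N) k j)); last by apply/funext => N; exact: e.
apply: cvg_lim => //.
have := cvgB (cvg_cst (invmx (1 - A) i j))
  (cvg_sum_seq (index_enum 'I_n.+1) (fun k N => invmx (1 - A) i k * (A ^+ N) k j) _).
rewrite subr0; apply.
move=> k; have := cvgM (cvg_cst (invmx (1 - A) i k)) (@spec_cvg0 _ A hs k j).
by rewrite mulr0; apply.
Qed.
End Spec.
Section Calc.
Variable R : realType.
Implicit Types f g : R -> R.

Definition hd f (a : R) := derivable f 0 1 /\ 'D_1 f 0 = a.

Lemma hd_cst (c : R) : hd (fun _ => c) 0.
Proof. split; [exact: derivable_cst | exact: derive_cst]. Qed.

Lemma hd_add f g a b : hd f a -> hd g b -> hd (fun h => f h + g h) (a + b).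
Proof.
move=> [df <-] [dg <-]; split; first exact: derivableD.
exact: deriveD.
Qed.

Lemma hd_mul f g a b : hd f a -> hd g b ->
  hd (fun h => f h * g h) (f 0 * b + g 0 * a).
Proof.
move=> [df <-] [dg <-]; split; first exact: derivableM.
exact: deriveM.
Qed.

Lemma hd_scal f c a : hd f a -> hd (fun h => c * f h) (c * a).
Proof.
move=> ha; have := hd_mul (hd_cst c) ha.
by rewrite mulr0 addr0.
Qed.

Lemma hd_opp f a : hd f a -> hd (fun h => - f h) (- a).
Proof.
move=> ha; have := hd_scal (-1) ha; rewrite mulN1r.
by rewrite (_ : (fun h => -1 * f h) = (fun h => - f h)) // ; apply/funext => h; rewrite mulN1r.
Qed.

Lemma hd_inv f a : f 0 != 0 -> hd f a -> hd (fun h => (f h)^-1) (- (f 0) ^- 2 * a).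
Proof.
move=> f0 [df <-]; split; first exact: derivableV.
exact: deriveV.
Qed.

Lemma hd_sum (I : Type) (s : seq I) (F : I -> R -> R) (dF : I -> R) :
  (forall i, hd (F i) (dF i)) ->
  hd (fun h => \sum_(i <- s) F i h) (\sum_(i <- s) dF i).
Proof.
move=> hF; elim: s => [|x s IH].
  rewrite big_nil (_ : (fun h => _) = fun _ => 0); first exact: hd_cst.
  by apply/funext => h; rewrite big_nil.
rewrite big_cons (_ : (fun h => _) = (fun h => F x h + \sum_(i <- s) F i h)).
  exact: hd_add.
by apply/funext => h; rewrite big_cons.
Qed.

Lemma hd_near f g a : (\forall h \near 0, f h = g h) -> hd f a -> hd g a.
Proof.
move=> fg [df <-]; split; first by apply: near_eq_derivable df; near=> h; rewrite (near fg).
by apply/esym/near_eq_derive.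
Unshelve. all: by end_near.
Qed.

Lemma hd_unique f a b : hd f a -> hd f b -> a = b.
Proof. by move=> [_ <-] [_ <-]. Qed.

Lemma hd_ex f : derivable f 0 1 -> hd f ('D_1 f 0).
Proof. by []. Qed.

Lemma dv_prod (I : Type) (s : seq I) (F : I -> R -> R) :
  (forall i, derivable (F i) 0 1) ->
  derivable (fun h => \prod_(i <- s) F i h) 0 1.
Proof.
move=> hF; elim: s => [|x s IH].
  rewrite (_ : (fun h => _) = fun _ => 1); first exact: derivable_cst.
  by apply/funext => h; rewrite big_nil.
rewrite (_ : (fun h => _) = (fun h => F x h * \prod_(i <- s) F i h)).
  exact: derivableM.
by apply/funext => h; rewrite big_cons.
Qed.

Lemma dv_sum (I : Type) (s : seq I) (F : I -> R -> R) :
  (forall i, derivable (F i) 0 1) ->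
  derivable (fun h => \sum_(i <- s) F i h) 0 1.
Proof.
move=> hF; elim: s => [|x s IH].
  rewrite (_ : (fun h => _) = fun _ => 0); first exact: derivable_cst.
  by apply/funext => h; rewrite big_nil.
rewrite (_ : (fun h => _) = (fun h => F x h + \sum_(i <- s) F i h)).
  exact: derivableD.
by apply/funext => h; rewrite big_cons.
Qed.

Lemma dv_det m (M : R -> 'M[R]_m) :
  (forall i j, derivable (fun h => M h i j) 0 1) ->
  derivable (fun h => \det (M h)) 0 1.
Proof.
move=> hM; rewrite /determinant.
apply: dv_sum => s; apply: derivableM; first exact: derivable_cst.
by apply: dv_prod => i.
Qed.
Lemma near_unit m (M : R -> 'M[R]_m) :
  (forall i j, derivable (fun h => M h i j) 0 1) -> \det (M 0) != 0 ->
  \forall h \near 0, M h \in unitmx.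
Proof.
move=> hM d0.
have c : {for 0, continuous (fun h => \det (M h))}.
  exact/differentiable_continuous/derivable1_diffP/dv_det.
have := @cvgr_neq0 _ _ _ _ _ (fun h => \det (M h)) _ c d0.
move=> H; near=> h; rewrite unitmxE unitfE; exact: (near (H _) h).
Unshelve. all: by end_near.
Qed.

Lemma dv_invmx m (M : R -> 'M[R]_m) :
  (forall i j, derivable (fun h => M h i j) 0 1) -> \det (M 0) != 0 ->
  forall i j, derivable (fun h => invmx (M h) i j) 0 1.
Proof.
move=> hM d0 i j.
have hu := @near_unit _ M hM d0.
apply: (@near_eq_derivable _ _ _ (fun h => (\det (M h))^-1 *
   ((-1) ^+ (j + i) * \det (row' j (col' i (M h)))))).
  near=> h; rewrite /invmx (near hu h) //.
  by rewrite mxE /adjugate mxE.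
apply: derivableM.
  apply: derivableV => //; exact: dv_det.
apply: derivableM; first exact: derivable_cst.
apply: dv_det => a b /=.
by rewrite (_ : (fun h => _) = (fun h => M h (lift j a) (lift i b)));
  [apply: hM | apply/funext => h; rewrite !mxE].
Unshelve. all: by end_near.
Qed.
Lemma hd_eqf f g a : (forall h, f h = g h) -> hd f a -> hd g a.
Proof. by move=> fg; rewrite (_ : g = f) //; apply/funext => h; rewrite fg. Qed.

Lemma hd_eqv f a b : a = b -> hd f a -> hd f b.
Proof. by move=> ->. Qed.

Lemma hd_mulc f c a : hd f a -> hd (fun h => f h * c) (a * c).
Proof.
move=> ha; apply: hd_eqf (fun h => mulrC c (f h)) _.
by rewrite mulrC; exact: hd_scal.
Qed.

Lemma hd_mxl m1 m2 m3 (A : 'M[R]_(m1, m2)) (X : R -> 'M[R]_(m2, m3)) (dX : 'M[R]_(m2, m3)) :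
  (forall k l, hd (fun h => X h k l) (dX k l)) ->
  forall x l, hd (fun h => (A *m X h) x l) ((A *m dX) x l).
Proof.
move=> hX x l; apply: (@hd_eqf (fun h => \sum_j A x j * X h j l)).
  by move=> h; rewrite mxE.
rewrite mxE; apply: hd_sum => k; exact: hd_scal.
Qed.

Lemma hd_mxr m1 m2 m3 (X : R -> 'M[R]_(m1, m2)) (B : 'M[R]_(m2, m3)) (dX : 'M[R]_(m1, m2)) :
  (forall k l, hd (fun h => X h k l) (dX k l)) ->
  forall x l, hd (fun h => (X h *m B) x l) ((dX *m B) x l).
Proof.
move=> hX x l; apply: (@hd_eqf (fun h => \sum_j X h x j * B j l)).
  by move=> h; rewrite mxE.
rewrite mxE; apply: hd_sum => k; exact: hd_mulc.
Qed.

Lemma hd_lin m (X : R -> 'M[R]_m) (dX : 'M[R]_m) (c k : R) :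
  (forall i j, hd (fun h => X h i j) (dX i j)) ->
  forall x y, hd (fun h => (c%:M - k *: X h) x y) ((- k *: dX) x y).
Proof.
move=> hX x y.
apply: (@hd_eqf (fun h => c%:M x y + - (k * X h x y))).
  by move=> h; rewrite [RHS]mxE; congr (_ + _); rewrite !mxE.
rewrite [(- k *: dX) x y]mxE mulNr -[X in hd _ X]add0r; apply: hd_add; first exact: hd_cst.
by apply: hd_opp; exact: hd_scal.
Qed.
End Calc.
Arguments hd {R}.
Section Main.
Variable R : realType.
Variables (nS nA n d : nat).
Variables (P : 'I_nS -> 'I_nA -> 'I_nS -> R) (r : 'I_nS -> 'I_nA -> R)
  (gamma : R) (nu : 'I_n.+1 -> 'I_nS -> R)
  (pi : 'rV[R]_d -> 'I_nS -> 'I_nA -> R) (th : 'rV[R]_d).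
Hypothesis hpi0 : forall th' s a, 0 < pi th' s a.
Hypothesis hdiff : forall th' s a, differentiable (fun t : 'rV[R]_d => pi t s a) th'.
Hypothesis hspec : spectral_radius_lt1 (gamma *: PU pi P nu th).
Variable e : 'rV[R]_d.

Definition L (f : 'rV[R]_d -> R) : R -> R := fun h => f (h *: e + th).

Lemma Lderivable f : derivable f th e <-> derivable (L f) 0 1.
Proof. exact: derivable1P. Qed.

Lemma Lderive f : 'D_e f th = 'D_1 (L f) 0.
Proof.
rewrite /derive /L; congr (lim _).
suff -> : (fun h : R => h^-1 *: ((f \o shift th) (h *: e) - f th)) =
  (fun h : R => h^-1 *: (((fun h0 : R => f (h0 *: e + th)) \o shift 0) h%:A
     - f (0 *: e + th))) by [].
apply/funext => h /=.
by rewrite scale0r add0r addr0 /GRing.scale /= mulr1.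
Qed.

Definition g s a := L (fun t => pi t s a).
Lemma hg s a : derivable (g s a) 0 1.
Proof. by apply/Lderivable; apply: diff_derivable; exact: hdiff. Qed.
Definition Dg s a := 'D_1 (g s a) 0.
Lemma g0 s a : g s a 0 = pi th s a.
Proof. by rewrite /g /L scale0r add0r. Qed.

Lemma Dln s a : pi th s a * 'D_e (fun t => ln (pi t s a)) th = Dg s a.
Proof.
rewrite Lderive (_ : L _ = (@ln R) \o g s a) //.
have hp := hpi0 th s a.
have hl : derivable (@ln R) (g s a 0) 1.
  by rewrite g0; apply: ex_derive; exact: is_derive1_ln.
rewrite -derive1E derive1_comp //; last exact: hg.
rewrite derive1E derive1E g0.
have [_ ->] := is_derive1_ln hp.
by rewrite mulrA mulfV ?mul1r // gt_eqF.
Qed.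

Definition dPS : 'M[R]_nS := \matrix_(k, l) \sum_a Dg k a * P k a l.
Definition dRS : 'cV[R]_nS := \col_k \sum_a Dg k a * r k a.

Lemma hPS k l : hd (fun h => PS pi P (h *: e + th) k l) (dPS k l).
Proof.
apply: (@hd_eqf _ (fun h => \sum_a g k a h * P k a l)).
  by move=> h; rewrite mxE.
rewrite mxE; apply: hd_sum => a; apply: hd_mulc; exact: hd_ex (hg k a).
Qed.

Lemma hRS k l : hd (fun h => RS pi r (h *: e + th) k l) (dRS k l).
Proof.
apply: (@hd_eqf _ (fun h => \sum_a g k a h * r k a)).
  by move=> h; rewrite mxE.
rewrite mxE; apply: hd_sum => a; apply: hd_mulc; exact: hd_ex (hg k a).
Qed.

Definition Mh h := 1%:M - gamma *: PU pi P nu (h *: e + th).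
Definition bh h := Pnu nu *m RS pi r (h *: e + th).
Definition Vh h := VU pi P r nu gamma (h *: e + th).
Definition dM := - gamma *: (Pnu nu *m dPS *m pdag (Pnu nu)).
Definition db := Pnu nu *m dRS.

Lemma hM x y : hd (fun h => Mh h x y) (dM x y).
Proof.
apply: hd_lin => i j; rewrite /PU.
apply: hd_mxr => k l; apply: hd_mxl => k' l'; exact: hPS.
Qed.

Lemma hb x l : hd (fun h => bh h x l) (db x l).
Proof. by apply: hd_mxl => k l'; exact: hRS. Qed.

Lemma M0E : Mh 0 = 1%:M - gamma *: PU pi P nu th.
Proof. by rewrite /Mh scale0r add0r. Qed.

Lemma unit0 : Mh 0 \in unitmx.
Proof. rewrite M0E; exact: (@spec_unit _ _ _ hspec). Qed.

Lemma det0 : \det (Mh 0) != 0.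
Proof. by have := unit0; rewrite unitmxE unitfE. Qed.

Lemma hVd x : derivable (fun h => Vh h x 0) 0 1.
Proof.
rewrite (_ : (fun h => _) = fun h => \sum_y invmx (Mh h) x y * bh h y 0);
  last by apply/funext => h; rewrite /Vh /VU mxE.
apply: dv_sum => y; apply: derivableM.
  exact: (@dv_invmx _ _ Mh (fun i j => (hM i j).1) det0).
exact: (hb y 0).1.
Qed.

Definition dV : 'cV[R]_n.+1 := \col_y 'D_1 (fun h => Vh h y 0) 0.

Lemma key x : \sum_y (Mh 0 x y * dV y 0 + Vh 0 y 0 * dM x y) = db x 0.
Proof.
have h1 := hd_sum (index_enum 'I_n.+1)
  (fun y h => Mh h x y * Vh h y 0) _ (fun y => hd_mul (hM x y) (hd_ex (hVd y))).
have hu := @near_unit _ _ Mh (fun i j => (hM i j).1) det0.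
have h2 : hd (fun h => bh h x 0)
   (\sum_y (Mh 0 x y * 'D_1 (fun h => Vh h y 0) 0 + Vh 0 y 0 * dM x y)).
  apply: hd_near h1; near=> h.
  have hh : Mh h *m Vh h = bh h by rewrite /Vh /VU mulKVmx // (near hu h).
  by rewrite -hh [RHS]mxE.
rewrite (hd_unique (hb x 0) h2); apply: eq_bigr => y _; rewrite /dV; congr (_ * _ + _); rewrite mxE.
Unshelve. all: by end_near.
Qed.

Lemma dVE : dV = invmx (Mh 0) *m (db - dM *m Vh 0).
Proof.
have : Mh 0 *m dV = db - dM *m Vh 0.
  apply/matrixP => x k; rewrite (ord1 k).
  have -> : (db - dM *m Vh 0) x 0 = db x 0 - (dM *m Vh 0) x 0 by rewrite !mxE.
  rewrite -(key x) big_split /= [(dM *m _) _ _]mxE.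
  have -> : \sum_y Vh 0 y 0 * dM x y = \sum_y dM x y * Vh 0 y 0.
    by apply: eq_bigr => y _; rewrite mulrC.
  by rewrite addrK mxE.
by move=> <-; rewrite mulKmx // unit0.
Qed.
Lemma etaE x u : etaU pi P nu gamma th x u = invmx (Mh 0) u x.
Proof.
rewrite M0E /etaU.
rewrite (_ : (fun N => \sum_(0 <= t < N) gamma ^+ t * (PU pi P nu th ^+ t) u x) =
  (fun N => \sum_(0 <= t < N) ((gamma *: PU pi P nu th) ^+ t) u x)).
  exact: (@eta_lim _ _ _ hspec u x).
by apply/funext => N; apply: eq_bigr => t _; rewrite exprZn mxE.
Qed.

Lemma V0E : Vh 0 = VU pi P r nu gamma th.
Proof. by rewrite /Vh scale0r add0r. Qed.

Lemma inner s :
  \sum_(a < nA) pi th s a * ('D_e (fun t => ln (pi t s a)) th) *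
            (r s a + gamma * \sum_(u' < n.+1) P1 P nu s a u' *
                                 VU pi P r nu gamma th u' 0) =
  dRS s 0 + gamma * (dPS *m (pdag (Pnu nu) *m Vh 0)) s 0.
Proof.
under eq_bigr => a _ do rewrite Dln mulrDr.
rewrite big_split /= /dRS mxE -V0E; congr (_ + _).
set pd := pdag (Pnu nu); set V := Vh 0.
transitivity (\sum_(a < nA) \sum_(l < nS) \sum_(u' < n.+1)
   gamma * (Dg s a * P s a l * pd l u' * V u' 0)).
  apply: eq_bigr => a _; rewrite /P1 exchange_big /= mulrA mulr_sumr.
  apply: eq_bigr => u' _; rewrite mulr_suml mulr_sumr.
  apply: eq_bigr => l _; rewrite /pd; ring.
rewrite exchange_big /= mxE mulr_sumr; apply: eq_bigr => l _.
rewrite /dPS !mxE mulr_suml mulr_sumr; apply: eq_bigr => a _.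
rewrite mulr_sumr mulr_sumr; apply: eq_bigr => u' _; ring.
Qed.

Lemma final u :
    derivable (fun t => VU pi P r nu gamma t u 0) th e /\
    ('D_e (fun t => VU pi P r nu gamma t u 0) th) =
      \sum_(x < n.+1) etaU pi P nu gamma th x u *
        \sum_(s < nS) nu x s *
          \sum_(a < nA) pi th s a * ('D_e (fun t => ln (pi t s a)) th) *
            (r s a + gamma * \sum_(u' < n.+1) P1 P nu s a u' *
                                 VU pi P r nu gamma th u' 0).
Proof.
split; first by apply/Lderivable; exact: hVd u.
rewrite Lderive.
have -> : 'D_1 (L (fun t => VU pi P r nu gamma t u 0)) 0 = dV u 0 by rewrite /dV mxE.
rewrite dVE mxE; apply: eq_bigr => x _; rewrite etaE; congr (_ * _).
under eq_bigr => s _ do rewrite inner.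
have -> : db - dM *m Vh 0 =
    Pnu nu *m (dRS + gamma *: (dPS *m (pdag (Pnu nu) *m Vh 0))).
  rewrite /db /dM mulmxDr; congr (_ + _).
  by rewrite -[in RHS]scalemxAr -scalemxAl scaleNr opprK !mulmxA.
rewrite mxE; apply: eq_bigr => s _; rewrite /Pnu mxE; congr (_ * _).
by rewrite mxE [X in _ + X]mxE.
Qed.
End Main.
Unset Implicit Arguments.
Local Close Scope classical_set_scope.
Theorem theorem4 (R : realType) (nS nA nU d : nat)
  (P : 'I_nS -> 'I_nA -> 'I_nS -> R) (r : 'I_nS -> 'I_nA -> R)
  (gamma : R) (nu : 'I_nU -> 'I_nS -> R)
  (pi : 'rV[R]_d -> 'I_nS -> 'I_nA -> R) (th : 'rV[R]_d) :
  (* ground MDP *)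
  (forall s a s', 0 <= P s a s') ->
  (forall s a, \sum_(s' < nS) P s a s' = 1) ->
  0 < gamma < 1 ->
  (* encoding: each row a probability distribution, full row rank *)
  (forall u s, 0 <= nu u s) ->
  (forall u, \sum_(s < nS) nu u s = 1) ->
  row_free (Pnu nu) ->
  (* parametrized policy: positive, a distribution, differentiable in theta *)
  (forall th' s a, 0 < pi th' s a) ->
  (forall th' s, \sum_(a < nA) pi th' s a = 1) ->
  (forall th' s a, differentiable (fun t : 'rV[R]_d => pi t s a) th') ->
  (* spectral radius of gamma P_U^theta < 1 *)
  spectral_radius_lt1 (gamma *: PU pi P nu th) ->
  forall (u : 'I_nU) (i : 'I_d),
    let e := delta_mx 0 i : 'rV[R]_d in
    derivable (fun t => VU pi P r nu gamma t u 0) th e /\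
    ('D_e (fun t => VU pi P r nu gamma t u 0) th) =
      \sum_(x < nU) etaU pi P nu gamma th x u *
        \sum_(s < nS) nu x s *
          \sum_(a < nA) pi th s a * ('D_e (fun t => ln (pi t s a)) th) *
            (r s a + gamma * \sum_(u' < nU) P1 P nu s a u' *
                                 VU pi P r nu gamma th u' 0).
Proof.
move=> hP0 hP1 hg hnu0 hnu1 hfree hpi0 hpi1 hdiff hspec u i e.
case: nU nu hnu0 hnu1 hfree hspec u => [|n] nu hnu0 hnu1 hfree hspec u.
  by case: u.
exact: (@final R nS nA n d P r gamma nu pi th hpi0 hdiff hspec e u).
Qed.
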